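(* Let $X$ be a random variable with survival function $\overline{F}(x) = \mathbb{P}(X > x)$ given by $\overline{F}(x) = 1$ for $x < 0$ and $\overline{F}(x) = (\lfloor x \rfloor + 2)^{-1}$ for $x \geq 0$. For $n \geq 2$ let $X_1, \dots, X_n$ be i.i.d. copies of $X$ and $\overline{X}_n = \frac{1}{n}\sum_{i=1}^n X_i$. Then $X \leq_{\mathrm{st}} \overline{X}_n$ for all $n \geq 2$.
   Context: For random variables $X, Y$, $X \leq_{\mathrm{st}} Y$ means $\mathbb{P}(X > x) \leq \mathbb{P}(Y > x)$ for all $x \in \mathbb{R}$. *)

(* Defs.v *)
From HB Require Import structures.
From mathcomp Require Import all_boot all_order all_algebra.
From mathcomp Require Import all_classical all_reals all_analysis.
Set Implicit Arguments. Unset Strict Implicit. Unset Printing Implicit Defensive.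
Import Order.TTheory GRing.Theory Num.Theory.
Local Open Scope classical_set_scope.
Local Open Scope ring_scope.

Definition Fbar (R : realType) (x : R) : R :=
  if x < 0 then 1 else ((Num.floor x)%:~R + 2)^-1.

Definition has_survival d (T : measurableType d) (R : realType)
  (P : probability T R) (X : T -> R) (F : R -> R) : Prop :=
  forall x : R, P [set t | x < X t] = (F x)%:E.

Definition mutually_independent d (T : measurableType d) (R : realType)
  (P : probability T R) (n : nat) (X : 'I_n -> T -> R) : Prop :=
  forall B : 'I_n -> set R, (forall i, measurable (B i)) ->
    P (\bigcap_(i in [set: 'I_n]) (X i @^-1` B i)) =
    (\prod_(i < n) P (X i @^-1` B i))%E.

Definition st_le d (T : measurableType d) d' (T' : measurableType d')
  (R : realType) (P : probability T R) (X : T -> R)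
  (Q : probability T' R) (Y : T' -> R) : Prop :=
  forall x : R, (P [set t | (x < X t)%R] <= Q [set t | (x < Y t)%R])%E.

(* Main.v *)
Require Import Defs.
From HB Require Import structures.
From mathcomp Require Import all_boot all_order all_algebra.
From mathcomp Require Import all_classical all_reals all_analysis.
From mathcomp Require Import ring lra.
Import Order.TTheory GRing.Theory Num.Theory.
Local Open Scope classical_set_scope.
Local Open Scope ring_scope.

Lemma bern (R : realType) (t : R) (j : nat) : 0 <= t -> 1 + j%:R * t <= (1 + t) ^+ j.
Proof.
move=> t0; elim: j => [|j IH]; first by rewrite mul0r addr0 expr0.
rewrite exprS -natr1.
have h : 0 <= (1 + t) ^+ j by apply: exprn_ge0; lra.
have : 0 <= j%:R :> R by [].
nra.
Qed.

Lemma key (R : realType) (n : nat) (k a : R) : (0 < n)%N -> 0 <= k -> 0 <= a ->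
  a + 1 <= n%:R * (k + 1) -> (k + 2)^-1 <= 1 - (1 - (a + 2)^-1) ^+ n.
Proof.
move=> n0 k0 a0 haN.
have n1 : 1 <= n%:R :> R by rewrite ler1n.
set N := n%:R * (k + 1).
have N0 : 0 < N by rewrite /N; nra.
set q := N / (N + 1).
have e1 : 1 - (a + 2)^-1 = (a + 1) / (a + 2) by field; lra.
have h1 : 1 - (a + 2)^-1 <= q.
  rewrite e1 /q ler_pdivrMr; last lra.
  rewrite mulrAC ler_pdivlMr; last lra.
  have haN' : a + 1 <= N by [].
  nra.
have h2 : (1 - (a + 2)^-1) ^+ n <= q ^+ n.
  apply: lerXn2r => //; rewrite nnegrE ?e1 /q; apply: divr_ge0; lra.
set u := 1 + N^-1.
have qu : q * u = 1 by rewrite /q /u; field; lra.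
have Nn : 0 <= N^-1 by rewrite invr_ge0; lra.
have hb := @bern R _ n Nn.
have hQU : q ^+ n * u ^+ n = 1 by rewrite -exprMn qu expr1n.
set c := (k + 1) / (k + 2).
have cB : c * (1 + n%:R * N^-1) = 1 by rewrite /c /N; field; lra.
have c0 : 0 <= c by rewrite /c; apply: divr_ge0; lra.
have Q0 : 0 <= q ^+ n by apply: exprn_ge0; rewrite /q; apply: divr_ge0; lra.
have hQc : q ^+ n <= c.
  have : q ^+ n * (c * (1 + n%:R * N^-1)) <= q ^+ n * (c * u ^+ n).
    by apply: ler_wpM2l => //; apply: ler_wpM2l.
  rewrite cB mulr1 mulrCA hQU mulr1 //.
have ec : 1 - c = (k + 2)^-1 by rewrite /c; field; lra.
lra.
Qed.

Theorem proposition2 (R : realType)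
  (d0 : measure_display) (T0 : measurableType d0) (P0 : probability T0 R)
  (X : {RV P0 >-> R})
  (d : measure_display) (T : measurableType d) (P : probability T R)
  (n : nat) (Xs : 'I_n -> {RV P >-> R}) :
  (2 <= n)%N ->
  has_survival P0 X (@Fbar R) ->
  (forall i, has_survival P (Xs i) (@Fbar R)) ->
  mutually_independent P (fun i => Xs i : T -> R) ->
  st_le P0 X P (fun t => n%:R^-1 * \sum_(i < n) Xs i t).
Proof.
move=> n2 hX hXs hind x.
have n0 : (0 < n)%N by apply: leq_trans n2.
have nR : 0 < n%:R :> R by rewrite ltr0n.
have hsurv : forall i a, P (Xs i @^-1` `]a, +oo[) = (Fbar a)%:E.
  move=> i a; rewrite -(hXs i a); congr (P _).
  by apply/funext => t; rewrite /preimage /= in_itv /= andbT.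
have mpre : forall i (A : set R), measurable A -> measurable (Xs i @^-1` A).
  by move=> i A mA; apply: measurable_funPTI.
have Fneg : forall a : R, a < 0 -> Fbar a = 1 by move=> a a0; rewrite /Fbar a0.
set S := [set t | x < n%:R^-1 * \sum_(i < n) Xs i t].
have mS : measurable S.
  have mf : measurable_fun setT (fun t => n%:R^-1 * \sum_(i < n) Xs i t).
    apply: measurable_realfun.measurable_funM; first exact: measurable_cst.
    by apply: measurable_sum => i; exact: measurable_funPT.
  have := mf measurableT _ (measurable_itv `]x, +oo[); rewrite setTI.
  congr measurable.
  by apply/funext => t; rewrite /preimage /= in_itv /= andbT.
rewrite hX.
have [xneg|xpos] := ltP x 0.
  set G := \bigcap_(i in [set: 'I_n]) (Xs i @^-1` `]x, +oo[).
  have mG : measurable G.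
    by apply: fin_bigcap_measurable => [|i _]; [exact: finite_finset | apply: mpre; exact: measurable_itv].
  have hG : P G = 1%E.
    rewrite /G (hind (fun=> `]x, +oo[%classic)); last by move=> i; exact: measurable_itv.
    by apply: big1 => i _; rewrite hsurv Fneg.
  rewrite Fneg // -hG; apply: le_measure; rewrite ?inE //.
  move=> t Gt; rewrite /S /= ltr_pdivlMl //.
  have -> : n%:R * x = \sum_(i < n) x by rewrite sumr_const card_ord mulr_natl.
  apply: ltr_sum.
    rewrite has_predT; first [by rewrite -cardT card_ord | by rewrite /index_enum -enumT size_enum_ord | by rewrite unlock /= -enumT size_enum_ord | by rewrite size_map size_enum_ord | by rewrite  -[index_enum _]enumT size_enum_ord].
  by move=> i _; have := Gt i I; rewrite /preimage /= in_itv /= andbT.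
set k := Num.floor x.
have k0 : 0 <= k%:~R :> R by rewrite ler0z floor_ge0.
have xk : x < k%:~R + 1 by have := floorD1_gt x; rewrite intrD.
have Fx : Fbar x = (k%:~R + 2)^-1 by rewrite /Fbar ltNge xpos.
set del := (k%:~R + 1 - x) / 2.
have del0 : 0 < del by rewrite /del; lra.
set y := n%:R * x + n%:R * del.
have y0 : 0 <= y by rewrite /y addr_ge0 // mulr_ge0 // ltW.
have yN : y < n%:R * (k%:~R + 1).
  by rewrite /y -mulrDr ltr_pM2l //; rewrite /del; lra.
set m := Num.floor y.
have m0 : 0 <= m%:~R :> R by rewrite ler0z floor_ge0.
have mN : m%:~R + 1 <= n%:R * (k%:~R + 1) :> R.
  have : (m < (n%:Z * (k + 1)))%R.
    by rewrite floor_lt_int intrM intrD /=.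
  rewrite -lezD1 => h.
  have := h; rewrite -(ler_int R) => h'.
  by move: h'; rewrite intrM !intrD.
have Fy : Fbar y = (m%:~R + 2)^-1 by rewrite /Fbar ltNge y0.
have Fd : Fbar (- del) = 1 by apply: Fneg; lra.
have dy : - del < y by lra.
have hA : forall i, P (Xs i @^-1` `]- del, +oo[) = 1%E by move=> i; rewrite hsurv Fd.
have hB : forall i, P (Xs i @^-1` `]- del, y]) = (1 - Fbar y)%:E.
  move=> i.
  have -> : Xs i @^-1` `]- del, y] = Xs i @^-1` `]- del, +oo[ `\` Xs i @^-1` `]y, +oo[.
    apply/seteqP; split => t /=; rewrite !in_itv /= !andbT.
      by case/andP => -> h; split => //; apply/negP; rewrite -leNgt.
    by case => -> /negP; rewrite -leNgt.
  rewrite measureD; [| exact: mpre (measurable_itv _) | exact: mpre (measurable_itv _) |]; last first.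
    apply: (le_lt_trans (probability_le1 P _)); last exact: ltry.
    exact: mpre (measurable_itv _).
  rewrite setIidr; last first.
    move=> t /=; rewrite !in_itv /= !andbT => h; exact: lt_trans dy h.
  transitivity ((Fbar (- del))%:E - (Fbar y)%:E)%E; last by rewrite Fd EFinB.
  by congr (_ - _)%E; exact: hsurv.
set G := \bigcap_(i in [set: 'I_n]) (Xs i @^-1` `]- del, +oo[).
set H := \bigcap_(i in [set: 'I_n]) (Xs i @^-1` `]- del, y]).
have mG : measurable G.
  by apply: fin_bigcap_measurable => [|i _]; [exact: finite_finset | apply: mpre; exact: measurable_itv].
have mH : measurable H.
  by apply: fin_bigcap_measurable => [|i _]; [exact: finite_finset | apply: mpre; exact: measurable_itv].
have hG : P G = 1%E.
  rewrite /G (hind (fun=> `]- del, +oo[%classic)); last by move=> i; exact: measurable_itv.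
  by apply: big1 => i _; rewrite -Fd; exact: hsurv.
have hH : P H = ((1 - Fbar y) ^+ n)%:E.
  rewrite /H (hind (fun=> `]- del, y]%classic)); last by move=> i; exact: measurable_itv.
  under eq_bigr do rewrite hB.
  by rewrite prodEFin prodr_const card_ord.
have HG : H `<=` G.
  move=> t Ht i _; have := Ht i I; rewrite /preimage /= !in_itv /= andbT.
  by case/andP.
have hGH : P (G `\` H) = (1 - (1 - Fbar y) ^+ n)%:E.
  rewrite measureD //; last by apply: (le_lt_trans (probability_le1 P mG)); exact: ltry.
  rewrite setIidr //.
  transitivity (1%E - P H)%E; first by congr (_ - _)%E; exact: hG.
  by rewrite hH EFinB.
apply: (@le_trans _ _ (P (G `\` H))).
  rewrite hGH lee_fin Fx Fy; apply: key => //.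
apply: le_measure; rewrite ?inE //; first exact: measurableD.
move=> t [Gt nHt]; rewrite /S /= ltNge; apply/negP => hle; apply: nHt => i _.
have Gi : forall j, - del < Xs j t.
  by move=> j; have := Gt j I; rewrite /preimage /= in_itv /= andbT.
rewrite /preimage /= in_itv /=; apply/andP; split; first exact: Gi.
rewrite ler_pdivrMl // in hle.
move: hle; rewrite (bigD1 i) //= => hle.
have hrest : \sum_(j < n | j != i) (- del) <= \sum_(j < n | j != i) Xs j t.
  by apply: ler_sum => j _; apply: ltW.
have e2 : \sum_(j < n) (- del) = - del + \sum_(j < n | j != i) (- del) by rewrite (bigD1 i).
have e3 : \sum_(j < n) (- del) = - (n%:R * del).
  by rewrite sumr_const card_ord mulNrn mulr_natl.
have ey : y = n%:R * x + n%:R * del by [].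
lra.
Qed.
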